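(* In the setting described in the context, for any vector $\boldsymbol{c}=(c_1,c_2)$ of positive integers and all $\theta_1,\theta_2\in\mathbb{R}$, $$\mathrm{cp}(A_{*,*}(\theta_1,\theta_2))=\mathrm{cp}\big({}^{\boldsymbol{c}}\!A_{*,*}(c_1\theta_1,c_2\theta_2)\big).$$
   Context: Let $S_0=\{1,\dots,s_0\}$ be finite and $A_{k,l}$, $k,l\in\{-1,0,1\}$, nonnegative $s_0\times s_0$ matrices with $\sum A_{k,l}$ stochastic; they are the transition blocks of a Markov chain $\{\boldsymbol{Y}_n\}$ on $\mathbb{Z}^2\times S_0$ with $\mathbb{P}(\boldsymbol{Y}_{n+1}=(x_1+k,x_2+l,j')\mid\boldsymbol{Y}_n=(x_1,x_2,j))=[A_{k,l}]_{j,j'}$ (no other transitions). Let $\mathbb{S}_+=\mathbb{Z}_+^2\times S_0$, $P_+$ the restriction of the transition matrix to $\mathbb{S}_+$, $\boldsymbol\pi_{*,*}$ the stationary distribution of $\sum A_{k,l}$, $a_1=\boldsymbol{\pi}_{*,*}\sum_l(A_{1,l}-A_{-1,l})\mathbf{1}$, $a_2=\boldsymbol{\pi}_{*,*}\sum_k(A_{k,1}-A_{k,-1})\mathbf{1}$. Standing assumptions: $\{\boldsymbol Y_n\}$ irreducible and aperiodic; $a_1<0$ or $a_2<0$; $P_+$ irreducible. $A_{*,*}(\theta_1,\theta_2)=\sum_{k,l}e^{k\theta_1+l\theta_2}A_{k,l}$. For a nonnegative square matrix $A$, $\mathrm{cp}(A)=\sup\{r\ge0:\sum_nr^nA^n<\infty\text{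 elementwise}\}$. Given $\boldsymbol c$, let $\mathbb{Z}_{0,m}=\{0,1,\dots,m\}$ and for $i,j\in\{-1,0,1\}$ define matrices ${}^{\boldsymbol{c}}\!A_{i,j}$ indexed by $(\mathbb{Z}_{0,c_1-1}\times\mathbb{Z}_{0,c_2-1}\times S_0)^2$ by $[{}^{\boldsymbol{c}}\!A_{i,j}]_{(m_1,m_2,s),(m_1',m_2',s')}=[A_{u_1,u_2}]_{s,s'}$ with $u_1=c_1i+m_1'-m_1$, $u_2=c_2j+m_2'-m_2$, if $u_1,u_2\in\{-1,0,1\}$, and $0$ otherwise (these are the transition blocks of the process $({}^{\boldsymbol c}X_{1,n},{}^{\boldsymbol c}X_{2,n},({}^{\boldsymbol c}M_{1,n},{}^{\boldsymbol c}M_{2,n},J_n))$ where $X_{i,n}=c_i\,{}^{\boldsymbol c}X_{i,n}+{}^{\boldsymbol c}M_{i,n}$, $0\le{}^{\boldsymbol c}M_{i,n}\le c_i-1$). Set ${}^{\boldsymbol{c}}\!A_{*,*}(\theta_1,\theta_2)=\sum_{i,j\in\{-1,0,1\}}e^{i\theta_1+j\theta_2}\,{}^{\boldsymbol{c}}\!A_{i,j}$. *)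

(* Defs.v *)
From HB Require Import structures.
From mathcomp Require Import all_boot all_order all_algebra.
From mathcomp Require Import all_classical all_reals all_analysis.
Set Implicit Arguments. Unset Strict Implicit. Unset Printing Implicit Defensive.
Import Order.TTheory GRing.Theory Num.Theory.
Local Open Scope ring_scope.

(* The jump set {-1,0,1}.  Transition blocks are given as a family
   A : int -> int -> 'M_s0 of which only the values A k l with
   k, l \in dom3 are ever used. *)
Definition dom3 : seq int := [:: -1; 0; 1].

Section Defs.
Variable R : realType.

Definition cp (n : nat) (M : 'M[R]_n) : \bar R :=
  ereal_sup [set r%:E | r in
    [set r : R | 0 <= r /\
       forall i j, (\sum_(0 <= k <oo) ((r ^+ k * (M ^+ k) i j)%:E) < +oo)%E]].

Variable s0 : nat.
Variable A : int -> int -> 'M[R]_s0.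

Definition Astar (t1 t2 : R) : 'M[R]_s0 :=
  \sum_(k <- dom3) \sum_(l <- dom3) (expR (k%:~R * t1 + l%:~R * t2) *: A k l).

Definition Asum : 'M[R]_s0 := \sum_(k <- dom3) \sum_(l <- dom3) A k l.

Definition state := (int * int * 'I_s0)%type.

Definition Ptrans (x y : state) : R :=
  let: (x1, x2, j) := x in let: (y1, y2, j') := y in
  if (y1 - x1 \in dom3) && (y2 - x2 \in dom3) then A (y1 - x1) (y2 - x2) j j'
  else 0.

Fixpoint reach_in (S : state -> Prop) (n : nat) (x y : state) : Prop :=
  match n with
  | 0 => x = y /\ S x
  | n'.+1 => S x /\ exists z, 0 < Ptrans x z /\ reach_in S n' z y
  end.

Definition irreducible_on (S : state -> Prop) : Prop :=
  forall x y, S x -> S y -> exists n, reach_in S n x y.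

Definition Y_irreducible : Prop := irreducible_on (fun _ => True).

Definition Y_aperiodic : Prop :=
  forall (x : state) (d : nat),
    (forall n, (0 < n)%N -> reach_in (fun _ => True) n x x -> (d %| n)%N) ->
    d = 1%N.

Definition Splus (x : state) : Prop := let: (x1, x2, _) := x in 0 <= x1 /\ 0 <= x2.
Definition Pplus_irreducible : Prop := irreducible_on Splus.

Definition stationary (pi : 'rV[R]_s0) : Prop :=
  (forall j, 0 <= pi 0 j) /\ \sum_j pi 0 j = 1 /\ pi *m Asum = pi.

Definition drift1 (pi : 'rV[R]_s0) : R :=
  (pi *m (\sum_(l <- dom3) (A 1 l - A (-1) l)) *m (const_mx 1 : 'cV[R]_s0)) 0 0.
Definition drift2 (pi : 'rV[R]_s0) : R :=
  (pi *m (\sum_(k <- dom3) (A k 1 - A k (-1))) *m (const_mx 1 : 'cV[R]_s0)) 0 0.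

(* the blocks ^c A_{i,j}, indexed by Z_{0,c1-1} x Z_{0,c2-1} x S0,
   realized as square matrices of size #|T| via the enumeration of T *)
Definition cidx (c1 c2 : nat) := ('I_c1 * 'I_c2 * 'I_s0)%type.

Definition cA (c1 c2 : nat) (i j : int) : 'M[R]_#|{: cidx c1 c2}| :=
  \matrix_(p, q)
    let: (m1, m2, s) := (enum_val p : cidx c1 c2) in
    let: (m1', m2', s') := (enum_val q : cidx c1 c2) in
    let u1 := (c1%:Z * i + (m1' : nat)%:Z - (m1 : nat)%:Z)%R in
    let u2 := (c2%:Z * j + (m2' : nat)%:Z - (m2 : nat)%:Z)%R in
    if (u1 \in dom3) && (u2 \in dom3) then A u1 u2 s s' else 0.

Definition cAstar (c1 c2 : nat) (t1 t2 : R) : 'M[R]_#|{: cidx c1 c2}| :=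
  \sum_(i <- dom3) \sum_(j <- dom3) (expR (i%:~R * t1 + j%:~R * t2) *: cA c1 c2 i j).

End Defs.

(* Main.v *)
Require Import Defs.
From HB Require Import structures.
From mathcomp Require Import all_boot all_order all_algebra.
From mathcomp Require Import all_classical all_reals all_analysis.
From mathcomp Require Import zify ring lra.
Import Order.TTheory GRing.Theory Num.Theory.
Local Open Scope ring_scope.

Section Aux.
Variable R : realType.

Ltac solve3 := move=> m' hm'; rewrite /dom3 !big_cons big_nil;
  do 4 (case: eqP => ?); rewrite ?mulr0n ?mulr1n ?addr0 ?add0r //; exfalso; lia.

Lemma count1 (c m : nat) (v : int) : (m < c)%N -> v \in dom3 ->
  \sum_(m' < c) \sum_(i <- dom3) (((c%:Z * i + (m' : nat)%:Z - m%:Z == v) : nat)%:R : R) = 1.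
Proof.
move=> hm hv.
have [k hk Hk] : exists2 k : nat, (k < c)%N & forall m' : nat, (m' < c)%N ->
   \sum_(i <- dom3) (((c%:Z * i + m'%:Z - m%:Z == v) : nat)%:R : R) = ((m' == k) : nat)%:R.
    move: hv; rewrite !inE => /orP [/eqP ->|/orP [/eqP ->|/eqP ->]].
    - case: m hm => [|m] hm.
        exists (c.-1); first lia.
        solve3.
      exists m; first lia.
      solve3.
    - exists m => //.
      solve3.
    - have [e|ne] := eqVneq m.+1 c.
        exists 0%N; first lia.
        solve3.
      exists m.+1; first lia.
      solve3.
rewrite (eq_bigr (fun m' : 'I_c => ((m' == k :> nat) : nat)%:R)); last first.
  by move=> m' _; rewrite Hk.
rewrite (bigD1 (Ordinal hk)) //= eqxx big1 ?addr0 // => j hj.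
suff -> : (j == k :> nat) = false by [].
by apply/negbTE; move: hj; apply: contra => /eqP e; apply/eqP/val_inj.
Qed.

Lemma oneD (c m : nat) (g : int -> R) : (m < c)%N ->
  \sum_(m' < c) \sum_(i <- dom3)
     (if (c%:Z * i + (m' : nat)%:Z - m%:Z) \in dom3
      then g (c%:Z * i + (m' : nat)%:Z - m%:Z) else 0) = \sum_(u <- dom3) g u.
Proof.
move=> hm.
have E : forall u : int, (if u \in dom3 then g u else 0) =
    \sum_(v <- dom3) ((u == v) : nat)%:R * g v.
  move=> u; rewrite /dom3 !big_cons big_nil !inE.
  have [->|h1] := eqVneq u (-1); first by rewrite /= !mul0r !mul1r !addr0.
  have [->|h2] := eqVneq u 0; first by rewrite /= !mul0r !mul1r !addr0 add0r.
  have [->|h3] := eqVneq u 1; first by rewrite /= !mul0r !mul1r !addr0 !add0r.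
  by rewrite /= !mul0r !addr0.
under eq_bigr do under eq_bigr do rewrite E.
under eq_bigr do rewrite exchange_big /=.
rewrite exchange_big /=.
rewrite big_seq [RHS]big_seq; apply: eq_bigr => v hv.
under eq_bigr do rewrite -mulr_suml.
by rewrite -mulr_suml count1 // mul1r.
Qed.

Lemma expo (c1 c2 : nat) (i j : int) (m1 m1' m2 m2' : nat) (t1 t2 : R) :
  expR (i%:~R * (c1%:R * t1) + j%:~R * (c2%:R * t2)) * expR (m1'%:~R * t1 + m2'%:~R * t2)
  = expR (m1%:~R * t1 + m2%:~R * t2) *
    expR ((c1%:Z * i + m1'%:Z - m1%:Z)%:~R * t1 + (c2%:Z * j + m2'%:Z - m2%:Z)%:~R * t2).
Proof.
rewrite -!expRD; congr expR; rewrite !intrD !intrM ?intrN /=.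
have e1 : (c1%:Z)%:~R = c1%:R :> R by [].
have e2 : (c2%:Z)%:~R = c2%:R :> R by [].
rewrite e1 e2; ring.
Qed.
End Aux.

Section Gen.
Variable R : realType.

Definition Pc {k} (M : 'M[R]_k) (r : R) : Prop :=
  forall i j, (\sum_(0 <= k <oo) ((r ^+ k * (M ^+ k) i j)%:E) < +oo)%E.

Lemma cp_eq k1 k2 (M1 : 'M[R]_k1) (M2 : 'M[R]_k2) :
  (forall r, 0 <= r -> (Pc M1 r <-> Pc M2 r)) -> cp M1 = cp M2.
Proof.
move=> H; rewrite /cp; congr ereal_sup; congr image.
apply/seteqP; split => r [r0 h]; split => //; by apply/(H r r0).
Qed.

Lemma mxpow_ge0 k (M : 'M[R]_k) : (forall i j, 0 <= M i j) ->
  forall N i j, 0 <= (M ^+ N) i j.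
Proof.
move=> H; elim=> [|N IH] i j.
  by rewrite expr0 mxE ler0n.
rewrite exprS -mulmxE mxE; apply: sumr_ge0 => l _; exact: mulr_ge0.
Qed.

Lemma ser_le (a b : nat -> R) (C : R) : 0 <= C ->
  (forall k, 0 <= b k) -> (forall k, 0 <= a k <= C * b k) ->
  (\sum_(0 <= k <oo) (b k)%:E < +oo)%E -> (\sum_(0 <= k <oo) (a k)%:E < +oo)%E.
Proof.
move=> C0 b0 H hb.
apply: le_lt_trans; first apply: (@lee_nneseries R (fun k => (a k)%:E) (fun k => (C * b k)%:E) xpredT 0).
- by move=> k _ _; rewrite lee_fin; case/andP: (H k).
- by move=> k _; rewrite lee_fin; case/andP: (H k).
under eq_eseriesr do rewrite EFinM.
rewrite nneseriesZl; last by move=> k _; rewrite lee_fin.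
by apply: lte_mul_pinfty => //; rewrite lee_fin.
Qed.

Lemma sum2_ge a b (F : 'I_a -> 'I_b -> R) i0 j0 : (forall i j, 0 <= F i j) ->
  F i0 j0 <= \sum_i \sum_j F i j.
Proof.
move=> H; rewrite (bigD1 i0) //= (bigD1 j0) //= -addrA lerDl.
by apply: addr_ge0; apply: sumr_ge0 => i _ //; apply: sumr_ge0.
Qed.
End Gen.
Arguments Pc {R k}.
Arguments mxpow_ge0 {R k M}.

Section Main.
Variables (R : realType) (s0 : nat) (A : int -> int -> 'M[R]_s0).
Variables (c1 c2 : nat) (hc1 : (0 < c1)%N) (hc2 : (0 < c2)%N) (t1 t2 : R).

Local Notation T := (cidx s0 c1 c2).
Local Notation n := #|{: T}|.
Local Notation Bc := (cAstar A c1 c2 (c1%:R * t1) (c2%:R * t2)).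
Local Notation As := (Astar A t1 t2).
Definition w (m1 : 'I_c1) (m2 : 'I_c2) : R := expR ((m1 : nat)%:~R * t1 + (m2 : nat)%:~R * t2).
Definition idx (m1 : 'I_c1) (m2 : 'I_c2) (s : 'I_s0) : 'I_n := enum_rank ((m1, m2, s) : T).

Lemma term m1 m2 s (m1' : 'I_c1) (m2' : 'I_c2) s' :
  Bc (idx m1 m2 s) (idx m1' m2' s') * w m1' m2' =
  w m1 m2 * \sum_(i <- dom3) \sum_(j <- dom3)
    (let u1 := (c1%:Z * i + (m1' : nat)%:Z - (m1 : nat)%:Z) in
     let u2 := (c2%:Z * j + (m2' : nat)%:Z - (m2 : nat)%:Z) in
     if u1 \in dom3 then (if u2 \in dom3 then
        expR (u1%:~R * t1 + u2%:~R * t2) * A u1 u2 s s' else 0) else 0).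
Proof.
rewrite /cAstar summxE mulr_suml mulr_sumr; apply: eq_bigr => i _.
rewrite summxE mulr_suml mulr_sumr; apply: eq_bigr => j _.
rewrite !mxE /idx !enum_rankK.
rewrite mulrAC /w.
rewrite (@expo R c1 c2 i j m1 m1' m2 m2' t1 t2).
have [h1|h1] := boolP (c1%:Z * i + (m1' : nat)%:Z - (m1 : nat)%:Z \in dom3);
have [h2|h2] := boolP (c2%:Z * j + (m2' : nat)%:Z - (m2 : nat)%:Z \in dom3);
  rewrite ?andbT ?andbF ?mulr0 ?mul0r //.
by rewrite mulrA.
Qed.

Lemma base m1 m2 s s' :
  \sum_(m1' < c1) \sum_(m2' < c2) Bc (idx m1 m2 s) (idx m1' m2' s') * w m1' m2' =
  w m1 m2 * As s s'.
Proof.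
under eq_bigr do under eq_bigr do rewrite term.
under eq_bigr do rewrite -mulr_sumr.
rewrite -mulr_sumr; congr (_ * _).
have inner : forall u1 : int,
  \sum_(m2' < c2) \sum_(j <- dom3)
     (if (c2%:Z * j + (m2' : nat)%:Z - (m2 : nat)%:Z) \in dom3
      then (fun l => expR (u1%:~R * t1 + l%:~R * t2) * A u1 l s s')
             (c2%:Z * j + (m2' : nat)%:Z - (m2 : nat)%:Z) else 0)
  = \sum_(l <- dom3) expR (u1%:~R * t1 + l%:~R * t2) * A u1 l s s'.
  by move=> u1; apply: (@oneD R c2 m2 (fun l => expR (u1%:~R * t1 + l%:~R * t2) * A u1 l s s')).
transitivity (\sum_(m1' < c1) \sum_(i <- dom3)
   (if (c1%:Z * i + (m1' : nat)%:Z - (m1 : nat)%:Z) \in dom3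
    then (fun k => \sum_(l <- dom3) expR (k%:~R * t1 + l%:~R * t2) * A k l s s')
         (c1%:Z * i + (m1' : nat)%:Z - (m1 : nat)%:Z) else 0)).
  apply: eq_bigr => m1' _; rewrite exchange_big; apply: eq_bigr => i _.
  case: ifP => h.
    rewrite -inner; apply: eq_bigr => m2' _; apply: eq_bigr => j _.
    by rewrite /= h.
  by rewrite big1 // => m2' _; rewrite big1 // => j _; rewrite /= h.
rewrite (@oneD R c1 m1 (fun k => \sum_(l <- dom3) expR (k%:~R * t1 + l%:~R * t2) * A k l s s')) //.
rewrite /Astar summxE; apply: eq_bigr => k _; rewrite summxE; apply: eq_bigr => l _.
by rewrite mxE.
Qed.

Lemma sumT (F : 'I_n -> R) :
  \sum_(r < n) F r = \sum_(a1 < c1) \sum_(a2 < c2) \sum_(σ < s0) F (idx a1 a2 σ).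
Proof.
rewrite (reindex (@enum_rank T)) /=; last first.
  by exists enum_val => x _; [apply: enum_rankK | apply: enum_valK].
rewrite pair_bigA /= pair_bigA /=.
by apply: eq_bigr => -[[a1 a2] σ] _.
Qed.

Lemma key N m1 m2 s s' :
  \sum_(m1' < c1) \sum_(m2' < c2) (Bc ^+ N) (idx m1 m2 s) (idx m1' m2' s') * w m1' m2' =
  w m1 m2 * (As ^+ N) s s'.
Proof.
elim: N m1 m2 s => [|N IH] m1 m2 s.
  rewrite !expr0 mxE.
  under eq_bigr do under eq_bigr do rewrite mxE /idx (inj_eq enum_rank_inj) !xpair_eqE.
  have [e|ne] := eqVneq s s'; last first.
    rewrite mulr0 big1 // => i _; rewrite big1 // => j _.
    by rewrite andbF mul0r.
  rewrite ?andbT mulr1 (bigD1 m1) //=.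
  rewrite [X in _ + X]big1 ?addr0; last first.
    move=> i hi; rewrite big1 // => j _.
    by rewrite eq_sym (negbTE hi) mul0r.
  rewrite (bigD1 m2) //= big1 ?addr0; last first.
    by move=> j hj; rewrite eq_sym (negbTE hj) andbF mul0r.
  by rewrite !eqxx mul1r.
rewrite !exprS -!mulmxE.
under eq_bigr do under eq_bigr do rewrite mxE mulr_suml.
under eq_bigr do rewrite exchange_big /=.
rewrite exchange_big /=.
under eq_bigr do under eq_bigr do under eq_bigr do rewrite -mulrA.
under eq_bigr do under eq_bigr do rewrite -mulr_sumr.
under eq_bigr do rewrite -mulr_sumr.
rewrite sumT.
under eq_bigr do under eq_bigr do under eq_bigr do rewrite IH.
rewrite mxE mulr_sumr.
under [RHS]eq_bigr do rewrite mulrA -base mulr_suml.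
under [RHS]eq_bigr do under eq_bigr do rewrite mulr_suml.
under eq_bigr do rewrite exchange_big /=.
rewrite exchange_big /=.
apply: eq_bigr => σ _; apply: eq_bigr => a1 _; apply: eq_bigr => a2 _.
by rewrite mulrA.
Qed.

Variable hA : forall k l, k \in dom3 -> l \in dom3 -> forall i j, 0 <= A k l i j.

Lemma As_ge0 i j : 0 <= As i j.
Proof.
rewrite /Astar summxE big_seq; apply: sumr_ge0 => k hk.
rewrite summxE big_seq; apply: sumr_ge0 => l hl.
by rewrite mxE; apply: mulr_ge0; [exact: expR_ge0 | exact: hA].
Qed.

Lemma Bc_ge0 p q : 0 <= Bc p q.
Proof.
rewrite /cAstar summxE; apply: sumr_ge0 => k _.
rewrite summxE; apply: sumr_ge0 => l _.
rewrite !mxE; apply: mulr_ge0; first exact: expR_ge0.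
case: (enum_val p) => [[a1 a2] x]; case: (enum_val q) => [[b1 b2] y].
by rewrite /=; case: ifP => // /andP [h1 h2]; apply: hA.
Qed.

Lemma w_gt0 a b : 0 < w a b.
Proof. exact: expR_gt0. Qed.

Lemma dir1 r : 0 <= r -> Pc As r -> Pc Bc r.
Proof.
move=> r0 HA p q.
rewrite -(enum_valK p) -(enum_valK q).
case: (enum_val p) => [[m1 m2] s]; case: (enum_val q) => [[m1' m2'] s'].
rewrite -/(idx m1 m2 s) -/(idx m1' m2' s').
apply: (@ser_le R _ (fun k => r ^+ k * (As ^+ k) s s') (w m1 m2 / w m1' m2')) (HA s s').
- by apply: divr_ge0; apply: ltW; apply: w_gt0.
- by move=> k; apply: mulr_ge0; [exact: exprn_ge0 | exact: mxpow_ge0 As_ge0 _ _ _].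
move=> k; apply/andP; split.
  by apply: mulr_ge0; [exact: exprn_ge0 | exact: mxpow_ge0 Bc_ge0 _ _ _].
rewrite mulrCA; apply: ler_wpM2l; first exact: exprn_ge0.
rewrite mulrAC ler_pdivlMr; last exact: w_gt0.
rewrite -key.
apply: (@sum2_ge R c1 c2 (fun i j => (Bc ^+ k) (idx m1 m2 s) (idx i j s') * w i j)).
move=> i j; apply: mulr_ge0; [exact: mxpow_ge0 Bc_ge0 _ _ _ | exact: ltW (w_gt0 _ _)].
Qed.

Lemma dir2 r : 0 <= r -> Pc Bc r -> Pc As r.
Proof.
move=> r0 HB s s'.
pose m1 := Ordinal hc1; pose m2 := Ordinal hc2.
have E : forall k, (r ^+ k * (As ^+ k) s s')%:E =
  (\sum_(m1' < c1) \sum_(m2' < c2)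
     ((w m1' m2' / w m1 m2) * (r ^+ k * (Bc ^+ k) (idx m1 m2 s) (idx m1' m2' s')))%:E)%E.
  move=> k; under eq_bigr do rewrite sumEFin; rewrite sumEFin; congr EFin.
  have wn : w m1 m2 != 0 by apply: lt0r_neq0; apply: w_gt0.
  transitivity (r ^+ k * ((w m1 m2)^-1 * (w m1 m2 * (As ^+ k) s s'))).
    by rewrite [(w m1 m2)^-1 * _]mulrA mulVf // mul1r.
  rewrite -key mulr_sumr mulr_sumr; apply: eq_bigr => i _.
  rewrite mulr_sumr mulr_sumr; apply: eq_bigr => j _.
  ring.
under eq_eseriesr do rewrite E.
have nn : forall k (i : 'I_c1) (j : 'I_c2),
    (0 <= ((w i j / w m1 m2) * (r ^+ k * (Bc ^+ k) (idx m1 m2 s) (idx i j s')))%:E)%E.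
  move=> k i j; rewrite lee_fin; apply: mulr_ge0.
    by apply: divr_ge0; apply: ltW; apply: w_gt0.
  by apply: mulr_ge0; [exact: exprn_ge0 | exact: mxpow_ge0 Bc_ge0 _ _ _].
rewrite nneseries_sum; last by move=> i k _; apply: sume_ge0 => j _; apply: nn.
apply: lte_sum_pinfty => i _.
rewrite nneseries_sum; last by move=> j k _; apply: nn.
apply: lte_sum_pinfty => j _.
under eq_eseriesr do rewrite EFinM.
rewrite nneseriesZl; last first.
  move=> k _; rewrite lee_fin.
  by apply: mulr_ge0; [exact: exprn_ge0 | exact: mxpow_ge0 Bc_ge0 _ _ _].
apply: lte_mul_pinfty => //; first by rewrite lee_fin divr_ge0 // ltW // w_gt0.
Qed.
End Main.

Theorem proposition5p1 (R : realType) (s0 : nat) (A : int -> int -> 'M[R]_s0)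
  (pi : 'rV[R]_s0)
  (hs0 : (0 < s0)%N)
  (hA_nonneg : forall k l, k \in dom3 -> l \in dom3 -> forall i j, 0 <= A k l i j)
  (hA_stoch : forall i, \sum_j Asum A i j = 1)
  (hirr : Y_irreducible A)
  (haper : Y_aperiodic A)
  (hpi : stationary A pi)
  (hdrift : drift1 A pi < 0 \/ drift2 A pi < 0)
  (hPplus : Pplus_irreducible A)
  (c1 c2 : nat) (hc1 : (0 < c1)%N) (hc2 : (0 < c2)%N)
  (t1 t2 : R) :
  cp (Astar A t1 t2) = cp (cAstar A c1 c2 (c1%:R * t1) (c2%:R * t2)).
Proof.
apply: cp_eq => r r0; split.
  by eapply dir1; eauto.
by eapply dir2; eauto.
Qed.
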